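(* Let $\mathcal F$ be a Hilbert space with metric $d$ induced by its norm, $\mathcal D=(\phi_i)_{i\in\mathbb N}\subset\mathcal F$, and $\pi:\mathbb N\to\mathbb N$ of at most polynomial growth. For every finite $I\subset\mathbb N$ let $(\tilde\phi^I_i)_{i\in I}$ be an orthonormalization of $(\phi_i)_{i\in I}$ (e.g. Gram–Schmidt: pairwise orthogonal vectors, each of norm $0$ or $1$, spanning the same space as $(\phi_i)_{i\in I}$). For $M\in\mathbb N$ and $c>0$ set $$\Sigma^\pi_M=\Big\{\sum_{i\in I}c_i\phi_i:I\subset\{1,\dots,\pi(M)\},|I|\le M,(c_i)\in\mathbb R^I\Big\},\quad \tilde\Sigma^{\pi,c}_M=\Big\{\sum_{i\in I}\tilde c_i\tilde\phi^I_i:I\subset\{1,\dots,\pi(M)\},|I|\le M,(\tilde c_i)\in[-c,c]^I\Big\}.$$ Then for every $c>0$ the sequence $\tilde\Sigma^{\pi,c}=(\tilde\Sigma^{\pi,c}_M)_M$ is $\infty$-encodable in $(\mathcal F,d)$, and for every bounded non-empty $\mathcal C\subset\mathcal F$, $$\gamma^*(\mathcal C|\Sigma^\pi)=\max_{c>0}\gamma^*(\mathcal C|\tilde\Sigma^{\pi,c})$$ (in particular the maximum is attained).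
   Context: Approximation speed: $\gamma^*(\mathcal C|\Sigma)=\sup\{\gamma\in\mathbb R:\sup_{f\in\mathcal C}\inf_{\Phi\in\Sigma_M}d(f,\Phi)=O(M^{-\gamma})\text{ as }M\to\infty\}\in[-\infty,\infty]$ ($\sup\emptyset=-\infty$). A finite $X\subset A$ is an $\varepsilon$-covering of $A$ if every point of $A$ is within distance $\varepsilon$ of some point of $X$. For $\gamma,h>0$, a $(\gamma,h)$-encoding of $\Sigma=(\Sigma_M)_M$ is a sequence $(\Sigma(\gamma,h)_M)_M$ such that for some $c_1,c_2>0$ and all $M$, $\Sigma(\gamma,h)_M$ is a $c_1M^{-\gamma}$-covering of $\Sigma_M$ with $\log_2|\Sigma(\gamma,h)_M|\le c_2M^{1+h}$. $\Sigma$ is $\gamma$-encodable if it admits a $(\gamma,h)$-encoding for every $h>0$, and $\infty$-encodable if it is $\gamma$-encodable for every $\gamma>0$. *)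

(* Defs.v *)
From HB Require Import structures.
From mathcomp Require Import all_boot all_order all_algebra.
From mathcomp Require Import finmap.
From mathcomp Require Import all_classical all_reals all_analysis.
Set Implicit Arguments. Unset Strict Implicit. Unset Printing Implicit Defensive.
Import Order.TTheory GRing.Theory Num.Theory.
Import numFieldNormedType.Exports.
Local Open Scope classical_set_scope.
Local Open Scope ring_scope.


Section Defs.
Context {R : realType}.

Definition is_inner_product (V : normedModType R) (ip : V -> V -> R) : Prop :=
  [/\ (forall x y, ip x y = ip y x),
      (forall (a : R) x y z, ip (a *: x + y) z = a * ip x z + ip y z) &
      (forall x, ip x x = `|x| ^+ 2)].

Definition hilbert_space (V : completeNormedModType R) (ip : V -> V -> R) :=
  is_inner_product ip.

Definition poly_growth (pi : nat -> nat) : Prop :=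
  exists (k C : nat), forall M, (pi M <= C * M.+1 ^ k)%N.

Definition fspan (V : normedModType R) (I : {fset nat}) (f : nat -> V) : set V :=
  [set v | exists c : nat -> R, v = \sum_(i <- I) c i *: f i].

Definition orthonormalization (V : normedModType R) (ip : V -> V -> R)
  (phi : nat -> V) (phit : {fset nat} -> nat -> V) : Prop :=
  forall I : {fset nat},
    [/\ (forall i j, i \in I -> j \in I -> i != j -> ip (phit I i) (phit I j) = 0),
        (forall i, i \in I -> `|phit I i| = 0 \/ `|phit I i| = 1) &
        fspan I (phit I) = fspan I phi].

Definition Sigma (V : normedModType R) (phi : nat -> V) (pi : nat -> nat)
  (M : nat) : set V :=
  [set v | exists (I : {fset nat}) (c : nat -> R),
     [/\ (forall i, i \in I -> (1 <= i <= pi M)%N), (#|` I|%fset <= M)%N &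
         v = \sum_(i <- I) c i *: phi i] ].

Definition Sigma_tilde (V : normedModType R) (phit : {fset nat} -> nat -> V)
  (pi : nat -> nat) (c : R) (M : nat) : set V :=
  [set v | exists (I : {fset nat}) (ct : nat -> R),
     [/\ (forall i, i \in I -> (1 <= i <= pi M)%N), (#|` I|%fset <= M)%N,
         (forall i, i \in I -> - c <= ct i <= c) &
         v = \sum_(i <- I) ct i *: phit I i] ].

Definition covering (V : normedModType R) (eps : R) (X : {fset V}) (A : set V) : Prop :=
  (forall x, x \in X -> A x) /\
  (forall a, A a -> exists2 x, x \in X & `|a - x| <= eps).

Definition log2 (x : R) : R := ln x / ln 2.

Definition is_encoding (V : normedModType R) (Sig : nat -> set V) (g h : R)
  (X : nat -> {fset V}) : Prop :=
  exists c1 c2 : R, [/\ 0 < c1, 0 < c2 &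
    forall M : nat, (1 <= M)%N ->
      covering (c1 * (M%:R) `^ (- g)) (X M) (Sig M) /\
      log2 ((#|` X M|)%fset%:R) <= c2 * (M%:R) `^ (1 + h)].

Definition gamma_encodable (V : normedModType R) (Sig : nat -> set V) (g : R) : Prop :=
  forall h : R, 0 < h -> exists X : nat -> {fset V}, is_encoding Sig g h X.

Definition infty_encodable (V : normedModType R) (Sig : nat -> set V) : Prop :=
  forall g : R, 0 < g -> gamma_encodable Sig g.

Definition approx_err (V : normedModType R) (C : set V) (Sig : nat -> set V)
  (M : nat) : \bar R :=
  ereal_sup [set ereal_inf [set (`|f - p|)%:E | p in Sig M] | f in C].

(* gamma^*(C | Sig) in [-oo, +oo]; ereal_sup set0 = -oo *)
Definition approx_speed (V : normedModType R) (C : set V) (Sig : nat -> set V) : \bar R :=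
  ereal_sup [set g%:E | g in
    [set g : R | exists (K : R) (N : nat), forall M : nat, (N <= M)%N -> (1 <= M)%N ->
        (approx_err C Sig M <= (K * (M%:R) `^ (- g))%:E)%E] ].

Definition bounded_subset (V : normedModType R) (C : set V) : Prop :=
  exists r : R, forall x, C x -> `|x| <= r.

End Defs.

(* Main.v *)
Require Import Defs.
From HB Require Import structures.
From mathcomp Require Import all_boot all_order all_algebra.
From mathcomp Require Import finmap.
From mathcomp Require Import all_classical all_reals all_analysis.
From mathcomp Require Import lra zify ring.
Import Order.TTheory GRing.Theory Num.Theory.
Import numFieldNormedType.Exports.
Local Open Scope classical_set_scope.
Local Open Scope ring_scope.
Set Implicit Arguments. Unset Strict Implicit.

Lemma ip0l (R : realType) (V : normedModType R) (ip : V -> V -> R) :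
  is_inner_product ip -> forall z, ip 0 z = 0.
Proof.
case=> _ HL _ z; have E := HL 1 0 0 z; rewrite scaler0 addr0 mul1r in E; lra.
Qed.

Lemma ip0r (R : realType) (V : normedModType R) (ip : V -> V -> R) :
  is_inner_product ip -> forall z, ip z 0 = 0.
Proof. move=> H z; case: (H) => Hs _ _; by rewrite Hs ip0l. Qed.

Lemma ipDl (R : realType) (V : normedModType R) (ip : V -> V -> R) :
  is_inner_product ip -> forall x y z, ip (x + y) z = ip x z + ip y z.
Proof. case=> _ HL _ x y z; have := HL 1 x y z; by rewrite scale1r mul1r. Qed.

Lemma ipZl (R : realType) (V : normedModType R) (ip : V -> V -> R) :
  is_inner_product ip -> forall a x z, ip (a *: x) z = a * ip x z.
Proof.
move=> H a x z; case: (H) => _ HL _; have := HL a x 0 z.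
by rewrite addr0 ip0l // addr0.
Qed.

Lemma ip_suml (R : realType) (V : normedModType R) (ip : V -> V -> R) :
  is_inner_product ip -> forall (s : seq nat) (F : nat -> V) z,
  ip (\sum_(i <- s) F i) z = \sum_(i <- s) ip (F i) z.
Proof.
move=> H s F z; elim: s => [|a s IH]; first by rewrite !big_nil ip0l.
by rewrite !big_cons ipDl // IH.
Qed.

Lemma ip_norm1 (R : realType) (V : normedModType R) (ip : V -> V -> R) :
  is_inner_product ip -> forall v e, `|e| = 1 -> `|ip v e| <= `|v|.
Proof.
move=> H v e e1; case: (H) => Hs HL Hn.
set t := ip v e.
have h0 : 0 <= ip ((- t) *: e + v) ((- t) *: e + v) by rewrite Hn sqr_ge0.
have E1 : ip e ((- t) *: e + v) = 0.
  by rewrite Hs HL Hn e1 expr1n mulr1 -/t addNr.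
have E2 : ip v ((- t) *: e + v) = - t * t + `|v| ^+ 2.
  by rewrite Hs HL Hn (Hs e v).
rewrite HL E1 E2 in h0.
have hv := normr_ge0 v.
rewrite ler_norml; apply/andP; split; nra.
Qed.

Lemma orth_coef (R : realType) (V : normedModType R) (ip : V -> V -> R) :
  is_inner_product ip -> forall (I : {fset nat}) (e : nat -> V) (b : nat -> R),
  (forall i j, i \in I -> j \in I -> i != j -> ip (e i) (e j) = 0) ->
  (forall i, i \in I -> `|e i| = 0 \/ `|e i| = 1) ->
  \sum_(i <- I) b i *: e i = \sum_(i <- I) ip (\sum_(k <- I) b k *: e k) (e i) *: e i.
Proof.
move=> H I e b Ho Hn; apply: eq_big_seq => j jI.
rewrite ip_suml // (bigD1_seq j) //= ?fset_uniq //.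
rewrite big1_seq ?addr0; last first.
  by move=> i /andP[ij iI]; rewrite ipZl // Ho // mulr0.
case: (H) => _ _ Hn2.
rewrite ipZl // Hn2; case: (Hn j jI) => E.
  by rewrite (normr0_eq0 E) !scaler0.
by rewrite E expr1n mulr1.
Qed.

Lemma tilde_sub (R : realType) (V : normedModType R) (ip : V -> V -> R) phi phit pi c M :
  orthonormalization ip phi phit ->
  Sigma_tilde phit pi c M `<=` Sigma phi pi M.
Proof.
move=> Hon v [I [ct [HI Hc Hct ->]]].
have : fspan I (phit I) (\sum_(i <- I) ct i *: phit I i) by exists ct.
case: (Hon I) => _ _ ->; case=> b Hb; exists I, b; split => //.
Qed.

Lemma approx_better (R : realType) (V : normedModType R) (ip : V -> V -> R) phi phit pi
  (r : R) f M v :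
  is_inner_product ip -> orthonormalization ip phi phit ->
  `|f| <= r -> Sigma phi pi M v ->
  exists w, Sigma_tilde phit pi (2 * r + 1) M w /\ `|f - w| <= `|f - v|.
Proof.
move=> H Hon fr [I [b [HI Hc Hv]]].
have [fle|flt] := leP `|f| `|f - v|.
  exists 0; split; last by rewrite subr0.
  exists fset0, (fun _ => 0); split;
    [by move=> i; rewrite in_fset0 | by rewrite cardfs0
    | by move=> i; rewrite in_fset0 | by rewrite big_seq_fset0].
have vle : `|v| <= 2 * r.
  have := ler_normB f (f - v); rewrite opprB addrC subrK; lra.
have : fspan I phi v by exists b.
case: (Hon I) => Ho Hn <-; case=> b' Hb'.
exists v; split => //; exists I, (fun i => ip v (phit I i)); split => //.
- move=> i iI; rewrite -ler_norml; case: (Hn i iI) => E.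
    by rewrite (normr0_eq0 E) ip0r // normr0; have := normr_ge0 v; lra.
  have := ip_norm1 H v E; have := normr_ge0 v; lra.
- have Ev := orth_coef H b' Ho Hn; by rewrite -Hb' in Ev.
Qed.

Lemma err_le (R : realType) (V : normedModType R) (C : set V) (S1 S2 : nat -> set V) M :
  (forall f p, C f -> S2 M p -> exists q, S1 M q /\ `|f - q| <= `|f - p|) ->
  (approx_err C S1 M <= approx_err C S2 M)%E.
Proof.
move=> Hq; apply: ub_ereal_sup => _ [f Cf <-].
apply: (@le_trans _ _ (ereal_inf [set (`|f - p|)%:E | p in S2 M])).
  apply: le_ereal_inf_tmp => _ [p Sp <-].
  have [q [Sq Hqq]] := Hq f p Cf Sp.
  apply: ge_ereal_inf; exists (`|f - q|)%:E; first by exists q.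
  by rewrite lee_fin.
by apply: le_ereal_sup_tmp; exists (ereal_inf [set (`|f - p|)%:E | p in S2 M]) => //; exists f.
Qed.

Lemma speed_le (R : realType) (V : normedModType R) (C : set V) (S1 S2 : nat -> set V) :
  (forall M, (approx_err C S1 M <= approx_err C S2 M)%E) ->
  (approx_speed C S2 <= approx_speed C S1)%E.
Proof.
move=> He; apply: le_ereal_sup => _ [g [K [N HK]] <-]; exists g => //.
exists K, N => M h1 h2; exact: le_trans (He M) (HK M h1 h2).
Qed.

Lemma part2 (R : realType) (V : normedModType R) (ip : V -> V -> R) phi phit pi :
  is_inner_product ip -> orthonormalization ip phi phit ->
  (forall C : set V, bounded_subset C -> C !=set0 ->
     (exists2 c0 : R, 0 < c0 &
        approx_speed C (Sigma phi pi) = approx_speed C (Sigma_tilde phit pi c0)) /\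
     (forall c : R, 0 < c ->
        (approx_speed C (Sigma_tilde phit pi c) <= approx_speed C (Sigma phi pi))%E)).
Proof.
move=> H Hon C [r Hr] [x0 Cx0].
have r0 : 0 <= r by apply: le_trans (Hr _ Cx0).
have sub : forall c M, (approx_err C (Sigma phi pi) M <= approx_err C (Sigma_tilde phit pi c) M)%E.
  move=> c M; apply: err_le => f p Cf Sp; exists p; split => //.
  exact: (tilde_sub Hon Sp).
split; last by move=> c _; apply: speed_le.
exists (2 * r + 1); first lra.
apply: le_anti; apply/andP; split; last exact: speed_le.
apply: speed_le => M; apply: err_le => f p Cf Sp.
exact: (approx_better H Hon (Hr f Cf) Sp).
Qed.

Lemma leq_expb (m n e : nat) : (m <= n)%N -> (m ^ e <= n ^ e)%N.
Proof. move=> mn; elim: e => // e IH; by rewrite !expnS leq_mul. Qed.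

Lemma natA_bound (Cp k G M P : nat) : (1 <= M)%N -> (P <= Cp * M.+1 ^ k)%N ->
  (P.+1 * ((M ^ G.+1).*2).+1 <= (3 * Cp.+1 * 2 ^ (k + G.+1)) * M ^ (k + G.+1))%N.
Proof.
move=> M1 HP.
have a1 : (1 <= M.+1 ^ k)%N by rewrite expn_gt0.
have b1 : (1 <= M.+1 ^ G.+1)%N by rewrite expn_gt0.
have hb : (M ^ G.+1 <= M.+1 ^ G.+1)%N by apply: leq_expb.
have e1 : (P.+1 <= Cp.+1 * M.+1 ^ k)%N by nia.
have e2 : (((M ^ G.+1).*2).+1 <= 3 * M.+1 ^ G.+1)%N by rewrite -muln2; lia.
have e3 : (M.+1 ^ (k + G.+1) <= 2 ^ (k + G.+1) * M ^ (k + G.+1))%N.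
  by rewrite -expnMn; apply: leq_expb; lia.
apply: leq_trans (leq_mul e1 e2) _.
have -> : (Cp.+1 * M.+1 ^ k * (3 * M.+1 ^ G.+1) = 3 * Cp.+1 * M.+1 ^ (k + G.+1))%N.
  by rewrite expnD; lia.
by have := leq_mul (leqnn (3 * Cp.+1)) e3; rewrite mulnA.
Qed.

Lemma ln_le_pow (R : realType) (h x : R) : 0 < h -> 0 < x -> ln x <= x `^ h / h.
Proof.
move=> h0 x0.
have p0 : 0 < x `^ h by apply: powR_gt0.
have := @le_ln1Dx R (x `^ h - 1); rewrite addrCA subrr addr0 ln_powR => H.
rewrite ler_pdivlMr // mulrC; apply: le_trans (H _) _; lra.
Qed.

Lemma sum_const_seq (R : realType) (s : seq nat) (x : R) :
  \sum_(i <- s) x = x *+ size s.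
Proof. by elim: s => [|a s IH]; rewrite ?big_nil ?big_cons ?IH ?mulrS. Qed.

Lemma log_bound (R : realType) (h : R) (D E M n : nat) : 0 < h -> (1 <= D)%N -> (1 <= M)%N ->
  (n <= (D * M ^ E) ^ M)%N ->
  log2 (n%:R : R) <= ((ln (D%:R : R) + E%:R / h) / ln 2) * (M%:R) `^ (1 + h).
Proof.
move=> h0 D1 M1 Hn.
have M0 : (0 : R) < M%:R by rewrite ltr0n.
have D0 : (1 : R) <= D%:R by rewrite ler1n.
have M1r : (1 : R) <= M%:R by rewrite ler1n.
have lD : 0 <= ln (D%:R : R) by apply: ln_ge0.
have l2 : (0 : R) < ln 2 by apply: ln_gt0; lra.
have ph1 : 1 <= (M%:R : R) `^ h.
  have := @ler_powR R (M%:R) (M1r) 0 h (ltW h0); rewrite powRr0; apply; by rewrite ler1n.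
have pD : (M%:R : R) `^ (1 + h) = M%:R * M%:R `^ h.
  by rewrite powRD ?powRr1 ?ler0n //; apply/implyP => _; rewrite gt_eqF.
have Eh : (0 : R) <= E%:R / h by apply: divr_ge0; [rewrite ler0n | lra].
rewrite /log2 pD.
have -> : (ln (D%:R : R) + E%:R / h) / ln 2 * (M%:R * M%:R `^ h)
   = ((ln (D%:R : R) + E%:R / h) * (M%:R * M%:R `^ h)) * (ln 2)^-1 by rewrite mulrAC.
apply: ler_wpM2r; first by rewrite invr_ge0 ltW.
case: n Hn => [|n] Hn.
  rewrite ln0 //; apply: mulr_ge0; first by rewrite addr_ge0.
  apply: mulr_ge0; [by rewrite ler0n | lra].
apply: (@le_trans _ _ (ln ((D%:R * M%:R ^+ E) ^+ M : R))).
  rewrite ler_ln ?posrE ?ltr0n //; last first.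
    by rewrite exprn_gt0 // mulr_gt0 ?exprn_gt0 // ltr0n.
  by rewrite -natrX -natrM -natrX ler_nat.
rewrite lnXn ?mulr_gt0 ?exprn_gt0 ?ltr0n // lnM ?posrE ?exprn_gt0 ?ltr0n //.
rewrite lnXn ?ltr0n //.
have Lm := ln_le_pow h0 M0.
set L := ln (M%:R : R) in Lm *; set Y := (M%:R : R) `^ h in ph1 Lm *.
set LD := ln (D%:R : R) in lD *.
rewrite -[X in X <= _]mulr_natr -(mulr_natr L).
have EL : L * E%:R <= E%:R / h * Y.
  rewrite (mulrC L) (_ : E%:R / h * Y = E%:R * (Y / h)); last by rewrite mulrA mulrAC.
  by apply: ler_wpM2l; [rewrite ler0n | exact: Lm].
have E0 : (0:R) <= E%:R by rewrite ler0n.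
have -> : (LD + E%:R / h) * (M%:R * Y) = ((LD + E%:R / h) * Y) * M%:R by rewrite mulrCA mulrC.
apply: ler_wpM2r; first by rewrite ler0n.
have : LD <= LD * Y by rewrite ler_peMr.
set Q := E%:R / h in EL Eh *. lra.
Qed.

Definition qv (R : realType) (c : R) (N k : nat) : R := - c + k%:R * (c / N%:R).
Definition kq (R : realType) (c : R) (N : nat) (x : R) : nat :=
  Num.trunc ((x + c) * N%:R / c).

Lemma qv_bound (R : realType) (c : R) N k : 0 < c -> (0 < N)%N -> (k <= N.*2)%N ->
  - c <= qv c N k <= c.
Proof.
move=> c0 N0 kN; rewrite /qv.
set u := c / N%:R.
have Nu : N%:R * u = c by rewrite /u; field; rewrite pnatr_eq0 -lt0n.
have u0 : 0 < u by rewrite /u divr_gt0 // ltr0n.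
have kr : (k%:R : R) <= 2 * N%:R by rewrite -natrM ler_nat mul2n.
have k0 : (0 : R) <= k%:R by rewrite ler0n.
apply/andP; split; nra.
Qed.

Lemma round_ok (R : realType) (c : R) N x : 0 < c -> (0 < N)%N -> - c <= x <= c ->
  (kq c N x <= N.*2)%N /\ `|x - qv c N (kq c N x)| <= c / N%:R.
Proof.
move=> c0 N0 /andP[xl xr]; rewrite /kq /qv.
set t := (x + c) * N%:R / c; set u := c / N%:R.
have Nu : N%:R * u = c by rewrite /u; field; rewrite pnatr_eq0 -lt0n.
have u0 : 0 < u by rewrite /u divr_gt0 // ltr0n.
have tu : t * u = x + c.
  by rewrite /t /u; field; rewrite pnatr_eq0 -lt0n N0 gt_eqF.
have t0 : 0 <= t.
  by rewrite /t divr_ge0 ?mulr_ge0 ?ler0n //; lra.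
have /andP[tl th] := truncn_itv t0.
set k := Num.trunc t in tl th *.
split.
  rewrite truncn_le_nat -addn1 natrD -muln2 natrM; nra.
rewrite ler_norml; apply/andP; split; nra.
Qed.

Definition Ip (P N M : nat) (p : {ffun 'I_M -> 'I_P.+1 * 'I_(N.*2).+1}) : {fset nat} :=
  seq_fset tt [seq i <- [seq val (p s).1 | s <- enum 'I_M] | i != 0%N].
Definition kp (P N M : nat) (p : {ffun 'I_M -> 'I_P.+1 * 'I_(N.*2).+1}) (i : nat) : nat :=
  (\max_(s < M | val (p s).1 == i) val (p s).2)%N.
Definition Phi (R : realType) (V : normedModType R) (phit : {fset nat} -> nat -> V) (c : R)
  (P N M : nat) (p : {ffun 'I_M -> 'I_P.+1 * 'I_(N.*2).+1}) : V :=
  \sum_(i <- Ip p) qv c N (kp p i) *: phit (Ip p) i.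
Definition Xenc (R : realType) (V : normedModType R) (phit : {fset nat} -> nat -> V) (c : R)
  (P N M : nat) : {fset V} :=
  seq_fset tt [seq Phi phit c p | p <- enum {: {ffun 'I_M -> 'I_P.+1 * 'I_(N.*2).+1}}].

Lemma Phi_mem (R : realType) (V : normedModType R) (phit : {fset nat} -> nat -> V) (c : R)
  (pi : nat -> nat) N M p : 0 < c -> (0 < N)%N ->
  Sigma_tilde phit pi c M (@Phi R V phit c (pi M) N M p).
Proof.
move=> c0 N0; exists (Ip p), (fun i => qv c N (kp p i)); split => //.
- move=> i; rewrite seq_fsetE mem_filter => /andP[i0 /mapP[s _ Ei]]; rewrite Ei in i0 *.
  apply/andP; split; first by rewrite lt0n.
  by have := ltn_ord (p s).1; rewrite ltnS.
- rewrite size_seq_fset; apply: leq_trans (size_undup _) _.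
  rewrite size_filter; apply: leq_trans (count_size _ _) _.
  by rewrite size_map size_enum_ord.
- move=> i _; apply: qv_bound => //.
  apply/bigmax_leqP => s _; by have := ltn_ord (p s).2; rewrite ltnS.
Qed.

Lemma card_X (R : realType) (V : normedModType R) (phit : {fset nat} -> nat -> V) (c : R) P N M :
  (#|` @Xenc R V phit c P N M| <= (P.+1 * (N.*2).+1) ^ M)%N.
Proof.
rewrite size_seq_fset; apply: leq_trans (size_undup _) _.
by rewrite size_map -cardE card_ffun card_prod !card_ord.
Qed.

Lemma cover_enc (R : realType) (V : normedModType R) (phit : {fset nat} -> nat -> V) (c : R)
  (pi : nat -> nat) N M a : 0 < c -> (0 < N)%N ->
  (forall I i, i \in I -> `|phit I i| <= 1) ->
  Sigma_tilde phit pi c M a ->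
  exists2 x, x \in @Xenc R V phit c (pi M) N M & `|a - x| <= M%:R * (c / N%:R).
Proof.
move=> c0 N0 Hph [I [ct [HI Hc Hct ->]]].
set P := pi M.
have nthP : forall s, (nth 0%N I s <= P)%N.
  move=> s; case: (ltnP s (size I)) => hs.
    by have /andP[_ ->] := HI _ (mem_nth 0%N hs).
  by rewrite nth_default.
pose p : {ffun 'I_M -> 'I_P.+1 * 'I_(N.*2).+1} :=
  [ffun s : 'I_M => (inord (nth 0%N I s), inord (kq c N (ct (nth 0%N I s))))].
have p1 : forall s, val (p s).1 = nth 0%N I s.
  by move=> s; rewrite ffunE /= inordK // ltnS nthP.
have idx : forall i, i \in I -> (index i I < M)%N.
  by move=> i iI; apply: leq_trans Hc; rewrite index_mem.
have EI : Ip p = I.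
  apply/fsetP => i; rewrite seq_fsetE mem_filter.
  apply/idP/idP.
    move=> /andP[i0 /mapP[s _ Ei]]; rewrite Ei p1 in i0 *.
    case: (ltnP s (size I)) => hs; first exact: mem_nth.
    by rewrite nth_default // eqxx in i0.
  move=> iI; apply/andP; split.
    by have /andP[+ _] := HI _ iI; rewrite lt0n.
  apply/mapP; exists (Ordinal (idx i iI)); first by rewrite mem_enum.
  by rewrite p1 /= nth_index.
have Ek : forall i, i \in I -> kp p i = kq c N (ct i).
  move=> i iI; have [kb _] := round_ok c0 N0 (Hct i iI).
  have Hcond : val (p (Ordinal (idx i iI))).1 == i by rewrite p1 /= nth_index.
  rewrite /kp; apply/eqP; rewrite eqn_leq; apply/andP; split.
    apply/bigmax_leqP => s /eqP Hs; rewrite p1 in Hs.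
    by rewrite ffunE /= Hs inordK // ltnS.
  have := leq_bigmax_cond (F := fun s => val (p s).2)
     (P := fun s => val (p s).1 == i) (Ordinal (idx i iI)) Hcond.
  by rewrite ffunE /= nth_index // inordK // ltnS.
exists (Phi phit c p).
  by rewrite seq_fsetE; apply/mapP; exists p => //; rewrite mem_enum.
rewrite /Phi EI -sumrB.
apply: le_trans (ler_norm_sum _ _ _) _.
apply: (@le_trans _ _ (\sum_(i <- I) (c / N%:R))).
  rewrite big_seq_cond [X in _ <= X]big_seq_cond; apply: ler_sum => i /andP[iI _].
  rewrite -scalerBl normrZ Ek //.
  have [_ Hr] := round_ok c0 N0 (Hct i iI).
  rewrite -[c / N%:R]mulr1; apply: ler_pM => //; exact: Hph.
rewrite sum_const_seq -[X in X <= _]mulr_natl; apply: ler_wpM2r.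
  by rewrite divr_ge0 ?ler0n // ltW.
by rewrite ler_nat.
Qed.

Lemma part1 (R : realType) (V : normedModType R) (ip : V -> V -> R) phi phit pi :
  poly_growth pi -> orthonormalization ip phi phit ->
  forall c : R, 0 < c -> infty_encodable (Sigma_tilde phit pi c).
Proof.
move=> [k [Cp Hpi]] Hon c c0 g g0 h h0.
pose G := (Num.trunc g).+1.
have gG : g <= G%:R by apply: ltW; exact: truncnS_gt.
exists (fun M => Xenc phit c (pi M) (M ^ G.+1) M).
pose E := (k + G.+1)%N; pose D := (3 * Cp.+1 * 2 ^ E)%N.
have D1 : (1 <= D)%N by rewrite /D !muln_gt0 expn_gt0.
exists c, ((ln (D%:R : R) + E%:R / h) / ln 2); split => //.
  have lD : 0 <= ln (D%:R : R) by apply: ln_ge0; rewrite ler1n.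
  have Eh : 0 < E%:R / h by rewrite divr_gt0 // ltr0n /E addnS.
  have l2 : (0 : R) < ln 2 by apply: ln_gt0; lra.
  apply: divr_gt0 => //; lra.
move=> M M1.
have N0 : (0 < M ^ G.+1)%N by rewrite expn_gt0 M1.
have Hph : forall I i, i \in I -> `|phit I i| <= 1.
  by move=> I i iI; case: (Hon I) => _ Hn _; case: (Hn i iI) => ->; rewrite ?ler01.
split; first split.
- move=> x; rewrite seq_fsetE => /mapP[p _ ->]; exact: Phi_mem.
- move=> a Sa; have [x xX Hx] := cover_enc c0 N0 Hph Sa.
  exists x => //; apply: le_trans Hx _.
  have M0 : (M%:R : R) != 0 by rewrite pnatr_eq0 -lt0n.
  have e1 : (M%:R : R) * (c / (M ^ G.+1)%N%:R) = c * (M%:R ^+ G)^-1.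
    by rewrite natrX exprS; field; rewrite M0 /= expf_neq0.
  rewrite e1; apply: ler_wpM2l; first exact: ltW.
  rewrite -powR_mulrn ?ler0n // -powRN.
  by apply: ler_powR; [rewrite ler1n | rewrite lerN2].
- apply: log_bound => //.
  apply: leq_trans (card_X _ _ _ _ _) _; apply: leq_expb.
  exact: natA_bound.
Qed.

Theorem mainTheorem15 (R : realType) (V : completeNormedModType R)
  (ip : V -> V -> R) (phi : nat -> V) (pi : nat -> nat)
  (phit : {fset nat} -> nat -> V) :
  hilbert_space ip ->
  poly_growth pi ->
  orthonormalization ip phi phit ->
  (forall c : R, 0 < c -> infty_encodable (Sigma_tilde phit pi c)) /\
  (forall C : set V, bounded_subset C -> C !=set0 ->
     (exists2 c0 : R, 0 < c0 &
        approx_speed C (Sigma phi pi) = approx_speed C (Sigma_tilde phit pi c0)) /\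
     (forall c : R, 0 < c ->
        (approx_speed C (Sigma_tilde phit pi c) <= approx_speed C (Sigma phi pi))%E)).
Proof.
move=> H Hpg Hon; split.
  exact: (part1 Hpg Hon).
exact: (@part2 R V ip phi phit pi H Hon).
Qed.
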